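(* Consider the least-squares approximate policy iteration sequence described in the context, and suppose $m+H-1>\log(\delta_{FV})/\log(1/\alpha)$ (with $\delta_{FV}<\infty$). Define $$\tau:=\frac{\alpha^m+\alpha^{m+H-1}}{1-\alpha}\delta_{FV}+\delta_{app}+\delta_{FV}\epsilon_{PE},\qquad \beta:=\alpha^{m+H-1}\delta_{FV}.$$ Then for every $k\ge1$, $$\|J^{\mu_k}-J^*\|_\infty \le \frac{\alpha^{kH}}{1-\alpha}+\frac{2\alpha^H\|J^{\mu_0}-J_0\|_\infty}{1-\alpha}\,k\,\max(\alpha^H,\beta)^{k-1} + \frac{2\alpha^H\frac{\tau}{1-\beta}+\epsilon_{LA}}{(1-\alpha^H)(1-\alpha)}.$$
   Context: Consider a Markov decision process with finite state space $S$, finite action space $A$, transition probabilities $P_{ij}(a)$, rewards $r(s,a)\in[0,1]$, and discount factor $\alpha\in(0,1)$. A (deterministic stationary) policy is a map $\mu:S\to A$; its value is $J^\mu(s)=E[\sum_{t\ge0}\alpha^t r(s_t,\mu(s_t))\mid s_0=s]$, and $J^*(s)=\max_\mu J^\mu(s)$. For a policy $\mu$, $(T_\mu J)(s)=r(s,\mu(s))+\alpha\sum_j P_{sj}(\mu(s))J(j)$; the Bellman operator is $(TJ)(s)=\max_{a\in A}\{r(s,a)+\alpha\sum_j P_{sj}(a)J(j)\}$; powers denote repeated application. $\|\cdot\|_\infty$ denotes the max norm and the induced matrix norm. Least-squares approximate policy iteration: fix integers $m\ge1$, $H\ge1$, constants $\epsilon_{LA},\epsilon_{PE}\ge0$, a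 feature matrix $\Phi\in\mathbb{R}^{|S|\times d}$ whose row $i$ is $\phi(i)^\top$, and subsets $D_k\subseteq S$ ($k\ge0$) such that $\{\phi(i)\}_{i\in D_k}$ has rank $d$. Let $\Phi_{D_k}$ be the submatrix of $\Phi$ with rows indexed by $D_k$, $P_k\in\{0,1\}^{|D_k|\times|S|}$ the matrix selecting the coordinates in $D_k$, and $\mathcal{M}_{k+1}:=\Phi(\Phi_{D_k}^\top\Phi_{D_k})^{-1}\Phi_{D_k}^\top P_k$ for $k\ge0$. Start with arbitrary $J_0\in\mathbb{R}^{|S|}$ and an arbitrary policy $\mu_0$. For each $k\ge0$: $\mu_{k+1}$ is any policy with $\|T^HJ_k-T_{\mu_{k+1}}T^{H-1}J_k\|_\infty\le\epsilon_{LA}$; $w_{k+1}\in\mathbb{R}^{|S|}$ is a noise vector with $w_{k+1}(i)=0$ for $i\notin D_k$ and $\|w_{k+1}\|_\infty\le\epsilon_{PE}$; and $J_{k+1}=\mathcal{M}_{k+1}(T^m_{\mu_{k+1}}T^{H-1}J_k+w_{k+1})$ (equivalently $J_{k+1}=\Phi\theta_{k+1}$ where $\theta_{k+1}$ minimizes $\sum_{i\in D_k}((\Phi\theta)(i)-\hat J_{k+1}(i))^2$ with $\hat J_{k+1}=T^m_{\mu_{k+1}}T^{H-1}J_k+w_{k+1}$). Define $\delta_{FV}:=\sup_{k\ge1}\|\mathcal{M}_k\|_\infty$ and $\delta_{app}:=\sup_{k\ge1}\sup_{\mu}\|\mathcal{M}_kJ^\mu-J^\mu\|_\infty$, the inner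 supremum over all policies. *)

(* Defs.v *)
From HB Require Import structures.
From mathcomp Require Import all_boot all_order all_algebra.
From mathcomp Require Import all_classical all_reals all_analysis.
Set Implicit Arguments. Unset Strict Implicit. Unset Printing Implicit Defensive.
Import Order.TTheory GRing.Theory Num.Theory.
Local Open Scope ring_scope.
Local Open Scope classical_set_scope.

Section MDP.
Variables (R : realType) (n : nat) (A : finType).
(* states are 'I_n; P s a j = P_{sj}(a); r s a = r(s,a) *)
Variables (P : 'I_n -> A -> 'I_n -> R) (r : 'I_n -> A -> R) (alpha : R).

Definition vec := 'I_n -> R.

Definition vnorm (v : vec) : R := \big[Num.max/0]_(i < n) `|v i|.

Definition mxnorm (M : 'M[R]_n) : R :=
  \big[Num.max/0]_(i < n) \sum_(j < n) `|M i j|.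

Definition mxapp (M : 'M[R]_n) (v : vec) : vec :=
  fun i => (M *m \col_j v j) i ord0.

Definition Pmu (mu : 'I_n -> A) : 'M[R]_n := \matrix_(i, j) P i (mu i) j.
Definition rmu (mu : 'I_n -> A) : vec := fun i => r i (mu i).

(* J^mu(s) = E[ sum_t alpha^t r(s_t, mu(s_t)) | s_0 = s ]
          = sum_{t>=0} alpha^t (P_mu^t r_mu)(s) *)
Definition Jmu (mu : 'I_n -> A) : vec :=
  fun s => limn (fun N : nat =>
    \sum_(t < N) alpha ^+ t * mxapp (Pmu mu ^+ t) (rmu mu) s).

(* J^*(s) = max over (deterministic stationary) policies; the seed mud is
   itself a policy, so this is exactly the maximum *)
Definition Jstar (mud : {ffun 'I_n -> A}) : vec :=
  fun s => \big[Num.max/Jmu mud s]_(mu : {ffun 'I_n -> A}) Jmu mu s.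

Definition Tmu (mu : 'I_n -> A) (J : vec) : vec :=
  fun s => r s (mu s) + alpha * \sum_(j < n) P s (mu s) j * J j.

(* Bellman operator; the seed a0 is one of the actions, so this is exactly
   the maximum over A *)
Definition Tbell (a0 : A) (J : vec) : vec :=
  fun s => \big[Num.max/(r s a0 + alpha * \sum_(j < n) P s a0 j * J j)]_(a : A)
             (r s a + alpha * \sum_(j < n) P s a j * J j).

Definition vsub (u v : vec) : vec := fun i => u i - v i.
Definition vadd (u v : vec) : vec := fun i => u i + v i.

Variable d : nat.
(* P_k : selection matrix of the coordinates in D *)
Definition selmx (D : {set 'I_n}) : 'M[R]_(#|D|, n) :=
  \matrix_(i, j) (enum_val i == j)%:R.
Definition PhiD (Phi : 'M[R]_(n, d)) (D : {set 'I_n}) : 'M[R]_(#|D|, d) :=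
  selmx D *m Phi.
Definition LSproj (Phi : 'M[R]_(n, d)) (D : {set 'I_n}) : 'M[R]_n :=
  Phi *m invmx ((PhiD Phi D)^T *m PhiD Phi D) *m (PhiD Phi D)^T *m selmx D.

End MDP.

Section Deltas.
Variables (R : realType) (n : nat) (A : finType) (d : nat).
Variables (P : 'I_n -> A -> 'I_n -> R) (r : 'I_n -> A -> R) (alpha : R).
Variables (Phi : 'M[R]_(n, d)) (D : nat -> {set 'I_n}).
Local Open Scope classical_set_scope.

(* M_k for k >= 1 : M_{k+1} built from D_k *)
Definition Mk (k : nat) : 'M[R]_n := LSproj Phi (D k.-1).

Definition deltaFV_set : set R :=
  [set x | exists k : nat, (1 <= k)%N /\ x = mxnorm (Mk k)].
Definition deltaFV : R := sup deltaFV_set.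

Definition deltaapp_set : set R :=
  [set x | exists (k : nat) (mu : 'I_n -> A), (1 <= k)%N /\
     x = vnorm (vsub (mxapp (Mk k) (Jmu P r alpha mu)) (Jmu P r alpha mu))].
Definition deltaapp : R := sup deltaapp_set.
End Deltas.

(* Main.v *)
Require Import Defs.
From HB Require Import structures.
From mathcomp Require Import all_boot all_order all_algebra.
From mathcomp Require Import all_classical all_reals all_analysis.
From mathcomp Require Import ring lra.
Import Order.TTheory GRing.Theory Num.Theory.
Import numFieldNormedType.Exports.
Local Open Scope ring_scope.
Local Open Scope classical_set_scope.


Section S.
Variables (R : realType) (n : nat) (A : finType).
Variables (P : 'I_n -> A -> 'I_n -> R) (r : 'I_n -> A -> R) (alpha : R).
Hypothesis HP0 : forall s a j, 0 <= P s a j.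
Hypothesis HP1 : forall s a, \sum_(j < n) P s a j = 1.
Hypothesis Hr : forall s a, 0 <= r s a <= 1.
Hypothesis Ha : 0 < alpha < 1.

Lemma mxappE (M : 'M[R]_n) (v : 'I_n -> R) i :
  mxapp M v i = \sum_j M i j * v j.
Proof. rewrite /mxapp !mxE; apply: eq_bigr => j _; by rewrite mxE. Qed.

Definition vt (mu : 'I_n -> A) t := mxapp (Pmu P mu ^+ t) (rmu r mu).

Lemma vt0 mu i : vt mu 0 i = r i (mu i).
Proof.
rewrite /vt mxappE expr0 (bigD1 i) //= big1 ?addr0.
  by rewrite mxE eqxx mul1r.
by move=> j /negbTE ji; rewrite mxE eq_sym ji mul0r.
Qed.

Lemma vtS mu t i : vt mu t.+1 i = \sum_j P i (mu i) j * vt mu t j.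
Proof.
rewrite /vt mxappE exprS.
under eq_bigr => k _ do rewrite -mulmxE mxE mulr_suml.
rewrite exchange_big /=; apply: eq_bigr => j _.
rewrite mxappE mulr_sumr; apply: eq_bigr => k _.
by rewrite mxE mulrA.
Qed.

Lemma vt_range mu t i : 0 <= vt mu t i <= 1.
Proof.
elim: t i => [|t IH] i; first by rewrite vt0 Hr.
rewrite vtS; apply/andP; split.
  by apply: sumr_ge0 => j _; apply: mulr_ge0 => //; case/andP: (IH j).
rewrite -(HP1 i (mu i)); apply: ler_sum => j _.
by apply: ler_piMr => //; case/andP: (IH j).
Qed.

Definition Sp mu N i := \sum_(t < N) alpha ^+ t * vt mu t i.

Lemma Sp_succ mu N i :
  Sp mu N.+1 i = r i (mu i) + alpha * \sum_j P i (mu i) j * Sp mu N j.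
Proof.
rewrite /Sp big_ord_recl expr0 mul1r vt0; congr (_ + _).
under eq_bigr => t _ do rewrite vtS /bump /= exprS mulr_sumr.
rewrite exchange_big mulr_sumr /=; apply: eq_bigr => j _.
rewrite mulr_sumr mulr_sumr; apply: eq_bigr => t _.
by rewrite /bump /=; ring.
Qed.

Lemma Sp_ge0 mu N i : 0 <= Sp mu N i.
Proof.
apply: sumr_ge0 => t _; apply: mulr_ge0; last by case/andP: (vt_range mu t i).
by apply: exprn_ge0; case/andP: Ha => /ltW.
Qed.

Lemma Sp_le mu N i : Sp mu N i <= (1 - alpha)^-1.
Proof.
case/andP: Ha => a0 a1.
have h1 : 0 < 1 - alpha by rewrite subr_gt0.
elim: N i => [|N IH] i.
  by rewrite /Sp big_ord0 invr_ge0 ltW.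
rewrite Sp_succ.
have : \sum_j P i (mu i) j * Sp mu N j <= (1 - alpha)^-1.
  apply: le_trans (_ : \sum_j P i (mu i) j * (1 - alpha)^-1 <= _).
    by apply: ler_sum => j _; apply: ler_wpM2l.
  by rewrite -mulr_suml HP1 mul1r.
move=> hs.
apply: le_trans (_ : 1 + alpha * (1 - alpha)^-1 <= _).
  apply: lerD; first by case/andP: (Hr i (mu i)).
  by apply: ler_wpM2l => //; apply: ltW.
rewrite le_eqVlt; apply/orP; left; apply/eqP; field; by rewrite lt0r_neq0.
Qed.

Lemma Sp_nd mu i : {homo (fun N => Sp mu N i) : a b / (a <= b)%N >-> a <= b}.
Proof.
apply/nondecreasing_seqP => N /=.
rewrite /Sp big_ord_recr /= lerDl; apply: mulr_ge0.
  by apply: exprn_ge0; case/andP: Ha => /ltW.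
by case/andP: (vt_range mu N i).
Qed.

Lemma Sp_cvg mu i : (Sp mu N i @[N --> \oo] --> (Jmu P r alpha mu i : R))%classic.
Proof.
have h : has_ubound (range (fun N => Sp mu N i)).
  by exists (1 - alpha)^-1 => x [N _ <-]; apply: Sp_le.
have := nondecreasing_cvgn (Sp_nd mu i) h.
move=> c; rewrite /Jmu -/(Sp mu _ i).
by rewrite (cvg_lim _ c).
Qed.


Lemma cvg_bigsum (I : eqType) (s : seq I) (f : I -> nat -> R) (l : I -> R) :
  (forall j, (f j N @[N --> \oo] --> l j)%classic) ->
  ((\sum_(j <- s) f j N) @[N --> \oo] --> \sum_(j <- s) l j)%classic.
Proof.
move=> h; elim: s => [|x s IH].
  rewrite big_nil.
  under eq_fun => N do rewrite big_nil.
  exact: cvg_cst.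
rewrite big_cons.
under eq_fun => N do rewrite big_cons.
exact: cvgD.
Qed.

Lemma Jmu_fix mu i :
  Jmu P r alpha mu i = r i (mu i) + alpha * \sum_j P i (mu i) j * Jmu P r alpha mu j.
Proof.
have c1 := Sp_cvg mu i.
rewrite -cvg_shiftS in c1.
have c2 : ((r i (mu i) + alpha * \sum_j P i (mu i) j * Sp mu N j) @[N --> \oo] -->
   r i (mu i) + alpha * \sum_j P i (mu i) j * Jmu P r alpha mu j)%classic.
  apply: cvgD; first exact: cvg_cst.
  apply: cvgMl_tmp; apply: cvg_bigsum => j.
  apply: cvgMl_tmp; exact: Sp_cvg.
rewrite -[LHS](cvg_lim _ c1) // -[RHS](cvg_lim _ c2) //.
congr (limn _); apply: funext => N /=; exact: Sp_succ.
Qed.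

Lemma Jmu_range mu i : 0 <= Jmu P r alpha mu i <= (1 - alpha)^-1.
Proof.
have c := Sp_cvg mu i.
have cv := cvgP _ c.
rewrite -(cvg_lim _ c) //.
apply/andP; split.
  apply: limr_ge => //.
  by apply: nearW => N; apply: Sp_ge0.
apply: limr_le => //.
by apply: nearW => N; apply: Sp_le.
Qed.

End S.


Section S3.
Variables (R : realType) (n : nat) (A : finType).

Lemma vnorm_ge (v : 'I_n -> R) i : `|v i| <= vnorm v.
Proof. exact: (le_bigmax _ (fun i => `|v i|)). Qed.

Lemma vnorm_ge0 (v : 'I_n -> R) : 0 <= vnorm v.
Proof. exact: bigmax_ge_id. Qed.

Lemma vnorm_le (v : 'I_n -> R) c : 0 <= c -> (forall i, `|v i| <= c) -> vnorm v <= c.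
Proof. move=> c0 h; apply: bigmax_le => // i _; exact: h. Qed.

Lemma mxapp_bound (M : 'M[R]_n) v i : `|mxapp M v i| <= mxnorm M * vnorm v.
Proof.
rewrite mxappE; apply: le_trans (ler_norm_sum _ _ _) _.
apply: le_trans (_ : \sum_j `|M i j| * vnorm v <= _).
  by apply: ler_sum => j _; rewrite normrM; apply: ler_wpM2l => //; apply: vnorm_ge.
rewrite -mulr_suml; apply: ler_wpM2r; first exact: vnorm_ge0.
exact: (le_bigmax _ (fun i => \sum_j `|M i j|)).
Qed.

Lemma mxapp_split (M : 'M[R]_n) X Y w i :
  mxapp M (vadd X w) i = mxapp M (vsub X Y) i + mxapp M Y i + mxapp M w i.
Proof.
rewrite !mxappE -!big_split; apply: eq_bigr => j _; rewrite /vadd /vsub /=; ring.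
Qed.

Variables (P : 'I_n -> A -> 'I_n -> R) (r : 'I_n -> A -> R) (alpha : R).

Lemma Jmu_le_Jstar (mud nu : {ffun 'I_n -> A}) s :
  Jmu P r alpha nu s <= Jstar P r alpha mud s.
Proof. exact: (le_bigmax _ (fun mu : {ffun 'I_n -> A} => Jmu P r alpha mu s)). Qed.

Lemma Jstar_le (mud : {ffun 'I_n -> A}) s x :
  (forall nu : {ffun 'I_n -> A}, Jmu P r alpha nu s <= x) -> Jstar P r alpha mud s <= x.
Proof. move=> h; apply: bigmax_le => // nu _; exact: h. Qed.

End S3.
Arguments vnorm_ge {R n}.
Arguments vnorm_ge0 {R n}.
Arguments vnorm_le {R n}.
Arguments mxapp_bound {R n}.
Arguments mxapp_split {R n}.
Arguments Jmu_le_Jstar {R n A}.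
Arguments Jstar_le {R n A}.


Section S2.
Variables (R : realType) (n : nat) (A : finType).
Variables (P : 'I_n -> A -> 'I_n -> R) (r : 'I_n -> A -> R) (alpha : R).
Hypothesis HP0 : forall s a j, 0 <= P s a j.
Hypothesis HP1 : forall s a, \sum_(j < n) P s a j = 1.
Hypothesis Hr : forall s a, 0 <= r s a <= 1.
Hypothesis Ha : 0 < alpha < 1.

Let a_ge0 : 0 <= alpha. Proof. by case/andP: Ha => /ltW. Qed.
Let a_lt1 : alpha < 1. Proof. by case/andP: Ha. Qed.
Let oma_gt0 : 0 < 1 - alpha. Proof. by rewrite subr_gt0. Qed.

Definition term a (V : 'I_n -> R) s := r s a + alpha * \sum_(j < n) P s a j * V j.

Lemma term_shift a {V W c} : (forall i, V i <= W i + c) ->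
  forall s, term a V s <= term a W s + alpha * c.
Proof.
move=> h s; rewrite /term -addrA lerD2l -mulrDr; apply: ler_wpM2l => //.
apply: le_trans (_ : \sum_j P s a j * (W j + c) <= _).
  by apply: ler_sum => j _; apply: ler_wpM2l.
under eq_bigr => j _ do rewrite mulrDr.
by rewrite big_split /= -mulr_suml HP1 mul1r.
Qed.

Lemma Tmu_shift (nu : 'I_n -> A) {V W c} : (forall i, V i <= W i + c) ->
  forall s, Tmu P r alpha nu V s <= Tmu P r alpha nu W s + alpha * c.
Proof. move=> h s; exact: (term_shift (nu s) h s). Qed.

Lemma term_le_T a0 a V s : term a V s <= Tbell P r alpha a0 V s.
Proof. rewrite /Tbell; exact: (le_bigmax _ (fun a => term a V s)). Qed.

Lemma Tbell_shift a0 V W c : (forall i, V i <= W i + c) ->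
  forall s, Tbell P r alpha a0 V s <= Tbell P r alpha a0 W s + alpha * c.
Proof.
move=> h s; rewrite {1}/Tbell; apply: bigmax_le.
  apply: le_trans (term_shift a0 h s) _; rewrite lerD2r; exact: term_le_T.
move=> a _; apply: le_trans (term_shift a h s) _; rewrite lerD2r; exact: term_le_T.
Qed.

Lemma Tmu_le_T a0 (nu : 'I_n -> A) V s : Tmu P r alpha nu V s <= Tbell P r alpha a0 V s.
Proof. exact: (term_le_T a0 (nu s) V s). Qed.

Lemma iter_shift (F : ('I_n -> R) -> ('I_n -> R)) :
  (forall V W c, (forall i, V i <= W i + c) -> forall s, F V s <= F W s + alpha * c) ->
  forall k V W c, (forall i, V i <= W i + c) ->
  forall s, iter k F V s <= iter k F W s + alpha ^+ k * c.
Proof.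
move=> hF; elim=> [|k IH] V W c h s /=; first by rewrite expr0 mul1r.
apply: le_trans (hF _ _ _ (IH V W c h) s) _.
by rewrite exprS mulrA.
Qed.

Lemma iter_mono (F : ('I_n -> R) -> ('I_n -> R)) :
  (forall V W c, (forall i, V i <= W i + c) -> forall s, F V s <= F W s + alpha * c) ->
  forall k V W, (forall i, V i <= W i) -> forall s, iter k F V s <= iter k F W s.
Proof.
move=> hF k V W h s.
have h' : forall i, V i <= W i + 0 by move=> i; rewrite addr0.
have hh := @iter_shift F hF k V W 0 h' s.
by move: hh; rewrite mulr0 addr0.
Qed.

Lemma iter_Tmu_le_T a0 (nu : 'I_n -> A) k V s :
  iter k (Tmu P r alpha nu) V s <= iter k (Tbell P r alpha a0) V s.
Proof.
elim: k s => [|k IH] s //=.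
apply: le_trans (Tmu_le_T a0 nu _ s).
have h' : forall i, iter k (Tmu P r alpha nu) V i <= iter k (Tbell P r alpha a0) V i + 0.
  by move=> i; rewrite addr0.
have hh := Tmu_shift nu h' s.
by move: hh; rewrite mulr0 addr0.
Qed.

Definition K := (1 - alpha)^-1.

Lemma K_eq : 1 + alpha * K = K.
Proof. rewrite /K; field; by rewrite lt0r_neq0. Qed.

Lemma K_ge0 : 0 <= K.
Proof. by rewrite /K invr_ge0 ltW. Qed.

Lemma term_range a V s : (forall j, 0 <= V j <= K) -> 0 <= term a V s <= K.
Proof.
move=> h; rewrite /term; apply/andP; split.
  apply: addr_ge0; first by case/andP: (Hr s a).
  apply: mulr_ge0 => //; apply: sumr_ge0 => j _; apply: mulr_ge0 => //.
  by case/andP: (h j).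
rewrite -K_eq; apply: lerD; first by case/andP: (Hr s a).
apply: ler_wpM2l => //.
apply: le_trans (_ : \sum_j P s a j * K <= _).
  by apply: ler_sum => j _; apply: ler_wpM2l => //; case/andP: (h j).
by rewrite -mulr_suml HP1 mul1r.
Qed.

Lemma Tbell_range a0 V s : (forall j, 0 <= V j <= K) -> 0 <= Tbell P r alpha a0 V s <= K.
Proof.
move=> h; apply/andP; split.
  apply: le_trans (term_le_T a0 a0 V s); by case/andP: (term_range a0 V s h).
rewrite /Tbell; apply: bigmax_le; first by case/andP: (term_range a0 V s h).
by move=> a _; case/andP: (term_range a V s h).
Qed.

Lemma iter_T_range a0 k V : (forall j, 0 <= V j <= K) ->
  forall s, 0 <= iter k (Tbell P r alpha a0) V s <= K.
Proof.
move=> h; elim: k => [|k IH] s //=; exact: Tbell_range.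
Qed.

Lemma Jmu_rng (nu : 'I_n -> A) j : 0 <= Jmu P r alpha nu j <= K.
Proof. exact: (@Jmu_range _ _ _ P r alpha HP0 HP1 Hr Ha nu j). Qed.

Lemma Jmu_T (nu : 'I_n -> A) : Tmu P r alpha nu (Jmu P r alpha nu) = Jmu P r alpha nu.
Proof. apply: funext => i; rewrite /Tmu; symmetry; exact: (@Jmu_fix _ _ _ P r alpha HP0 HP1 Hr Ha). Qed.

Lemma iter_Jmu (nu : 'I_n -> A) k : iter k (Tmu P r alpha nu) (Jmu P r alpha nu) = Jmu P r alpha nu.
Proof. elim: k => [|k IH] //=; by rewrite IH Jmu_T. Qed.

Lemma Jmu_lower (nu : 'I_n -> A) V dl : 0 <= dl ->
  (forall i, V i - dl <= Tmu P r alpha nu V i) ->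
  forall i, V i - dl * K <= Jmu P r alpha nu i.
Proof.
move=> dl0 h.
set J := Jmu P r alpha nu.
pose M := \big[Num.max/0]_(i < n) (V i - J i).
have hM : forall i, V i - J i <= M by move=> i; exact: (le_bigmax _ (fun i => V i - J i)).
have M0 : 0 <= M by exact: bigmax_ge_id.
have hVJ : forall i, V i <= J i + M by move=> i; rewrite -lerBlDl.
have hM2 : M <= dl + alpha * M.
  rewrite /M; apply: bigmax_le; first by apply: addr_ge0 => //; apply: mulr_ge0.
  move=> i _.
  have e1 := h i.
  have e2 := Tmu_shift nu hVJ i.
  rewrite /J Jmu_T -/J in e2.
  rewrite -/M; lra.
have : M * (1 - alpha) <= dl by lra.
move=> hh i.
have : M <= dl * K.
  rewrite /K; rewrite ler_pdivlMr //.
have := hM i. lra.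
Qed.


Lemma norm2 {x y c : R} : `|x - y| <= c -> x <= y + c /\ y <= x + c.
Proof. rewrite ler_norml => /andP[h1 h2]; split; lra. Qed.

Lemma TS a0 : forall V W c, (forall i, V i <= W i + c) ->
  forall s, Tbell P r alpha a0 V s <= Tbell P r alpha a0 W s + alpha * c.
Proof. exact: Tbell_shift. Qed.

Lemma TmS (nu : 'I_n -> A) : forall V W c, (forall i, V i <= W i + c) ->
  forall s, Tmu P r alpha nu V s <= Tmu P r alpha nu W s + alpha * c.
Proof. move=> V W c h; exact: Tmu_shift. Qed.

Lemma stepA a0 H (J0 : 'I_n -> R) (mu mu' mud : {ffun 'I_n -> A}) eps :
  (1 <= H)%N ->
  vnorm (vsub (iter H (Tbell P r alpha a0) J0)
     (Tmu P r alpha mu' (iter H.-1 (Tbell P r alpha a0) J0))) <= eps ->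
  vnorm (vsub (Jmu P r alpha mu') (Jstar P r alpha mud)) <=
   alpha ^+ H * vnorm (vsub (Jmu P r alpha mu) (Jstar P r alpha mud))
   + (2 * alpha ^+ H * vnorm (vsub (Jmu P r alpha mu) J0) + eps) * K.
Proof.
move=> H1 heps.
set T := Tbell P r alpha a0.
set Jm := Jmu P r alpha mu.
set Js := Jstar P r alpha mud.
set e := vnorm (vsub Jm J0).
set a := vnorm (vsub Jm Js).
have eps0 : 0 <= eps by apply: le_trans heps; exact: vnorm_ge0.
have e0 : 0 <= e by exact: vnorm_ge0.
have a0' : 0 <= a by exact: vnorm_ge0.
have hJ0 : forall i, J0 i <= Jm i + e by move=> i; case: (norm2 (vnorm_ge (vsub Jm J0) i)).
have hJm : forall i, Jm i <= J0 i + e by move=> i; case: (norm2 (vnorm_ge (vsub Jm J0) i)).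
have eH : alpha ^+ H = alpha * alpha ^+ H.-1 by rewrite -exprS prednK.
set V := iter H.-1 T Jm.
set V0 := iter H.-1 T J0.
have h1 : forall i, V0 i <= V i + alpha ^+ H.-1 * e.
  move=> i; exact: (@iter_shift _ (TS a0) H.-1 _ _ _ hJ0 i).
have h2 : forall s, Tmu P r alpha mu' V0 s <= Tmu P r alpha mu' V s + alpha ^+ H * e.
  by move=> s; rewrite eH -mulrA; exact: Tmu_shift.
have h3 : forall s, iter H T J0 s <= Tmu P r alpha mu' V0 s + eps.
  by move=> s; case: (norm2 (le_trans (vnorm_ge _ s) heps)).
have h4 : forall s, iter H T Jm s <= iter H T J0 s + alpha ^+ H * e.
  move=> s; exact: (@iter_shift _ (TS a0) H _ _ _ hJm s).
have h5 : forall s, V s <= iter H T Jm s.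
  move=> s; rewrite -(prednK H1) iterSr.
  apply: (@iter_mono _ (TS a0)) => i.
  apply: le_trans (Tmu_le_T a0 mu Jm i); by rewrite /Jm Jmu_T.
set dl := 2 * alpha ^+ H * e + eps.
have dl0 : 0 <= dl by rewrite /dl; apply: addr_ge0 => //; apply: mulr_ge0 => //;
   apply: mulr_ge0 => //; apply: exprn_ge0.
have hV : forall i, V i - dl <= Tmu P r alpha mu' V i.
  move=> i; have := h5 i; have := h4 i; have := h3 i; have := h2 i; rewrite /dl; lra.
have hL := @Jmu_lower mu' V dl dl0 hV.
have hL' : forall i, V i <= Jmu P r alpha mu' i + dl * K by move=> i; have := hL i; lra.
have hL2 : forall s, Tmu P r alpha mu' V s <= Jmu P r alpha mu' s + alpha * (dl * K).
  by move=> s; have := Tmu_shift mu' hL' s; rewrite Jmu_T.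
have kk : dl * K = dl + alpha * (dl * K) by rewrite -{1}K_eq; ring.
have low : forall s, iter H T Jm s <= Jmu P r alpha mu' s + dl * K.
  move=> s; have := hL2 s; have := h2 s; have := h3 s; have := h4 s; have dle : dl = 2 * alpha ^+ H * e + eps by []; lra.
have hS : forall s, Js s <= iter H T Jm s + alpha ^+ H * a.
  move=> s; apply: Jstar_le => nu.
  rewrite -(iter_Jmu nu H).
  have hn : forall i, Jmu P r alpha nu i <= Jm i + a.
    move=> i; have := Jmu_le_Jstar P r alpha mud nu i.
    case: (norm2 (vnorm_ge (vsub Jm Js) i)) => _ hh; rewrite -/Js -/a in hh *; lra.
  apply: le_trans (@iter_shift _ (TmS nu) H _ _ _ hn s) _.
  rewrite lerD2r; exact: iter_Tmu_le_T.
apply: vnorm_le.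
  apply: addr_ge0; first by apply: mulr_ge0 => //; apply: exprn_ge0.
  by apply: mulr_ge0 => //; exact: K_ge0.
move=> s; rewrite /vsub ler_norml.
have := Jmu_le_Jstar P r alpha mud mu' s; rewrite -/Js.
have := hS s; have := low s; rewrite -/dl; lra.
Qed.


Lemma mxnorm_ge0 (M : 'M[R]_n) : 0 <= mxnorm M.
Proof. exact: bigmax_ge_id. Qed.

Lemma stepB a0 m H (J0 : 'I_n -> R) (mu mu' : {ffun 'I_n -> A}) (M : 'M[R]_n) w
    dFV epsPE dapp :
  mxnorm M <= dFV -> vnorm w <= epsPE ->
  vnorm (vsub (mxapp M (Jmu P r alpha mu')) (Jmu P r alpha mu')) <= dapp ->
  vnorm (vsub (Jmu P r alpha mu')
     (mxapp M (vadd (iter m (Tmu P r alpha mu') (iter H.-1 (Tbell P r alpha a0) J0)) w)))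
  <= alpha ^+ (m + H.-1) * dFV * vnorm (vsub (Jmu P r alpha mu) J0)
     + (alpha ^+ m * K * dFV + dapp + dFV * epsPE).
Proof.
move=> hM hw hap.
have dFV0 : 0 <= dFV by apply: le_trans hM; exact: mxnorm_ge0.
have eps0 : 0 <= epsPE by apply: le_trans hw; exact: vnorm_ge0.
have dapp0 : 0 <= dapp by apply: le_trans hap; exact: vnorm_ge0.
set T := Tbell P r alpha a0.
set Jm := Jmu P r alpha mu.
set Y := Jmu P r alpha mu'.
set e := vnorm (vsub Jm J0).
have e0 : 0 <= e by exact: vnorm_ge0.
have hJ0 : forall i, J0 i <= Jm i + e by move=> i; case: (norm2 (vnorm_ge (vsub Jm J0) i)).
have hJm : forall i, Jm i <= J0 i + e by move=> i; case: (norm2 (vnorm_ge (vsub Jm J0) i)).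
set V0 := iter H.-1 T J0.
set X := iter m (Tmu P r alpha mu') V0.
set cc := alpha ^+ H.-1 * e + K.
have rngJm : forall j, 0 <= iter H.-1 T Jm j <= K.
  by apply: iter_T_range => j; exact: Jmu_rng.
have hA : forall j, V0 j <= Y j + cc.
  move=> j; have h1 := @iter_shift _ (TS a0) H.-1 _ _ _ hJ0 j.
  have := rngJm j; have := Jmu_rng mu' j; rewrite -/Y -/V0 -/T /cc in h1 *.
  move=> /andP[y0 y1] /andP[z0 z1]; lra.
have hB : forall j, Y j <= V0 j + cc.
  move=> j; have h1 := @iter_shift _ (TS a0) H.-1 _ _ _ hJm j.
  have := rngJm j; have := Jmu_rng mu' j; rewrite -/Y -/V0 -/T /cc in h1 *.
  move=> /andP[y0 y1] /andP[z0 z1]; lra.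
have cc0 : 0 <= cc by apply: addr_ge0; [apply: mulr_ge0 => //; apply: exprn_ge0 | exact: K_ge0].
have am0 : 0 <= alpha ^+ m by apply: exprn_ge0.
have hXY : vnorm (vsub X Y) <= alpha ^+ m * cc.
  apply: vnorm_le; first exact: mulr_ge0.
  move=> i; rewrite /vsub ler_norml.
  have h1 := @iter_shift _ (TmS mu') m _ _ _ hA i.
  have h2 := @iter_shift _ (TmS mu') m _ _ _ hB i.
  rewrite /Y iter_Jmu -/Y in h1 h2.
  rewrite -/X in h1 h2; lra.
apply: vnorm_le.
  apply: addr_ge0; first by apply: mulr_ge0 => //; apply: mulr_ge0 => //; apply: exprn_ge0.
  apply: addr_ge0; last exact: mulr_ge0.
  apply: addr_ge0 => //; apply: mulr_ge0 => //; apply: mulr_ge0 => //; exact: K_ge0.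
move=> i; rewrite /vsub (mxapp_split M X Y w i).
have t1 : `|mxapp M (vsub X Y) i| <= dFV * (alpha ^+ m * cc).
  apply: le_trans (mxapp_bound M _ i) _.
  apply: ler_pM => //; [exact: mxnorm_ge0 | exact: vnorm_ge0].
have t3 : `|mxapp M w i| <= dFV * epsPE.
  apply: le_trans (mxapp_bound M _ i) _.
  apply: ler_pM => //; [exact: mxnorm_ge0 | exact: vnorm_ge0].
have t2 : `|mxapp M Y i - Y i| <= dapp.
  exact: le_trans (vnorm_ge (vsub (mxapp M Y) Y) i) hap.
have eq : dFV * (alpha ^+ m * cc) =
   alpha ^+ (m + H.-1) * dFV * e + alpha ^+ m * K * dFV by rewrite /cc exprD; ring.
move: t1 t2 t3; rewrite !ler_norml eq => /andP[? ?] /andP[? ?] /andP[? ?].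
apply/andP; split; lra.
Qed.

End S2.


Lemma unroll (R : realType) (al x b e0 tau eps : R) (a e : nat -> R) :
  0 < al < 1 -> 0 <= x < 1 -> 0 <= b < 1 -> 0 <= e0 -> 0 <= tau -> 0 <= eps ->
  e 0%N = e0 -> (forall k, e k.+1 <= b * e k + tau) ->
  a 0%N <= (1 - al)^-1 ->
  (forall k, a k.+1 <= x * a k + (2 * x * e k + eps) * (1 - al)^-1) ->
  forall k, a k <= x ^+ k / (1 - al) + 2 * x * e0 / (1 - al) * k%:R * (Num.max x b) ^+ k.-1
     + (2 * x * (tau / (1 - b)) + eps) / ((1 - x) * (1 - al)).
Proof.
move=> /andP[al0 al1] /andP[x0 x1] /andP[b0 b1] e00 tau0 eps0 he0 hes ha0 has.
have omb : 0 < 1 - b by rewrite subr_gt0.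
have omx : 0 < 1 - x by rewrite subr_gt0.
have omal : 0 < 1 - al by rewrite subr_gt0.
set tp := tau / (1 - b).
have tp0 : 0 <= tp by rewrite /tp divr_ge0 // ltW.
have tpe : b * tp + tau = tp by rewrite /tp; field; rewrite lt0r_neq0.
have eb : forall k, e k <= b ^+ k * e0 + tp.
  elim=> [|k IH]; first by rewrite he0 expr0 mul1r lerDl.
  apply: le_trans (hes k) _.
  have := ler_wpM2l b0 IH; rewrite exprS; lra.
set K := (1 - al)^-1.
have K0 : 0 <= K by rewrite /K invr_ge0 ltW.
set Mx := Num.max x b.
set C := 2 * x * e0 / (1 - al).
set D := (2 * x * tp + eps) / ((1 - x) * (1 - al)).
have C0 : 0 <= C by rewrite /C; apply: divr_ge0; [rewrite !mulr_ge0 // | exact: ltW].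
have D0 : 0 <= D.
  rewrite /D divr_ge0 //; first by apply: addr_ge0 => //; apply: mulr_ge0 => //; apply: mulr_ge0.
  by apply: mulr_ge0; apply: ltW.
have G3 : x * D + (2 * x * tp + eps) * K = D.
  rewrite /D /K; field; apply/andP; split; rewrite lt0r_neq0 //.
have G5 : forall k, 2 * x * (b ^+ k * e0) * K = C * b ^+ k by move=> *; rewrite /C /K; ring.
have Mx0 : 0 <= Mx by rewrite /Mx le_max x0.
have xM : x <= Mx by rewrite /Mx le_max lexx.
have bM : b <= Mx by rewrite /Mx le_max lexx orbT.
elim=> [|k IH].
  rewrite expr0 mulr0 mul0r addr0 -/K mul1r.
  by apply: le_trans ha0 _; rewrite lerDl.
rewrite -/K -/C -/D in IH *.
have H1 := ler_wpM2l x0 IH.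
have H2 : (2 * x * e k + eps) * K <= (2 * x * (b ^+ k * e0 + tp) + eps) * K.
  apply: ler_wpM2r => //; rewrite lerD2r; apply: ler_wpM2l; [by apply: mulr_ge0 | exact: eb].
have F1 : x * (k%:R * Mx ^+ k.-1) <= k%:R * Mx ^+ k.
  case: k {IH H1 H2} => [|k] /=; first by rewrite !mul0r mulr0.
  rewrite exprS mulrCA; apply: ler_wpM2l; first by apply: ler0n.
  by apply: ler_wpM2r => //; apply: exprn_ge0.
have G1 := ler_wpM2l C0 F1.
have F2 : b ^+ k <= Mx ^+ k by apply: lerXn2r.
have G2 := ler_wpM2l C0 F2.
have G5k := G5 k.
apply: le_trans (has k) _.
have hk : k.+1%:R = k%:R + 1 :> R by rewrite -addn1 natrD.
rewrite exprS /= hk -/K.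
lra.
Qed.

Theorem theorem1 (R : realType) (n : nat) (A : finType)
  (P : 'I_n -> A -> 'I_n -> R) (r : 'I_n -> A -> R) (alpha : R)
  (m H d : nat) (epsLA epsPE : R) (Phi : 'M[R]_(n, d)) (D : nat -> {set 'I_n})
  (a0 : A) (J : nat -> 'I_n -> R) (mu : nat -> {ffun 'I_n -> A})
  (w : nat -> 'I_n -> R) :
  (* MDP *)
  (forall s a j, 0 <= P s a j) ->
  (forall s a, \sum_(j < n) P s a j = 1) ->
  (forall s a, 0 <= r s a <= 1) ->
  0 < alpha < 1 ->
  (* parameters *)
  (1 <= m)%N -> (1 <= H)%N -> 0 <= epsLA -> 0 <= epsPE ->
  (forall k, \rank (PhiD Phi (D k)) = d) ->
  (* the algorithm *)
  (forall k, vnorm (vsub (iter H (Tbell P r alpha a0) (J k))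
                         (Tmu P r alpha (mu k.+1)
                            (iter H.-1 (Tbell P r alpha a0) (J k)))) <= epsLA) ->
  (forall k i, i \notin D k -> w k.+1 i = 0) ->
  (forall k, vnorm (w k.+1) <= epsPE) ->
  (forall k, J k.+1 = mxapp (LSproj Phi (D k))
      (vadd (iter m (Tmu P r alpha (mu k.+1))
               (iter H.-1 (Tbell P r alpha a0) (J k))) (w k.+1))) ->
  (* delta_FV < oo and the horizon condition *)
  has_ubound (deltaFV_set Phi D) ->
  ln (deltaFV Phi D) / ln (alpha^-1) < (m + H - 1)%:R ->
  let dFV := deltaFV Phi D in
  let dapp := deltaapp P r alpha Phi D in
  let tau := (alpha ^+ m + alpha ^+ (m + H - 1)) / (1 - alpha) * dFV
             + dapp + dFV * epsPE in
  let beta := alpha ^+ (m + H - 1) * dFV in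
  forall k : nat, (1 <= k)%N ->
    vnorm (vsub (Jmu P r alpha (mu k)) (Jstar P r alpha (mu 0%N))) <=
      alpha ^+ (k * H) / (1 - alpha)
      + 2 * alpha ^+ H * vnorm (vsub (Jmu P r alpha (mu 0%N)) (J 0%N)) / (1 - alpha)
          * k%:R * (Num.max (alpha ^+ H) beta) ^+ k.-1
      + (2 * alpha ^+ H * (tau / (1 - beta)) + epsLA)
          / ((1 - alpha ^+ H) * (1 - alpha)).
Proof.
have andP_intro : forall b1 b2 : bool, b1 -> b2 -> b1 && b2 by move=> [] [].
move=> HP0 HP1 Hr Ha m1 H1 eLA0 ePE0 _ hLA _ hw hJ hub hln dFV dapp tau beta k _.
have al0 : 0 < alpha by case/andP: Ha.
have al1 : alpha < 1 by case/andP: Ha.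
have omal : 0 < 1 - alpha by rewrite subr_gt0.
have hMk : forall j, mxnorm (LSproj Phi (D j)) <= dFV.
  move=> j; apply: (ub_le_sup hub); exists j.+1; split => //.
have dFV0 : 0 <= dFV := le_trans (@mxnorm_ge0 _ _ _) (hMk 0%N).
have Kdef : K _ alpha = (1 - alpha)^-1 by [].
have Jn : forall nu : 'I_n -> A, vnorm (Jmu P r alpha nu) <= K _ alpha.
  move=> nu; apply: vnorm_le; first by rewrite Kdef invr_ge0 ltW.
  move=> i; have /andP[j0 j1] := @Jmu_rng _ _ _ P r alpha HP0 HP1 Hr Ha nu i.
  by rewrite ger0_norm.
have hap_ub : has_ubound (deltaapp_set P r alpha Phi D).
  exists (dFV * K _ alpha + K _ alpha) => x [j [nu [j1 ->]]].
  have K0 : 0 <= K _ alpha by rewrite Kdef invr_ge0 ltW.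
  apply: vnorm_le; first by apply: addr_ge0 => //; apply: mulr_ge0.
  move=> i; rewrite /vsub.
  apply: le_trans (ler_normB _ _) _.
  apply: lerD.
    apply: le_trans (mxapp_bound _ _ i) _.
    apply: ler_pM => //; [exact: (@mxnorm_ge0 _ _ _) | exact: vnorm_ge0 | exact: hMk].
  by apply: le_trans (vnorm_ge _ i) (Jn nu).
have hap : forall j, vnorm (vsub (mxapp (LSproj Phi (D j)) (Jmu P r alpha (mu j.+1)))
     (Jmu P r alpha (mu j.+1))) <= dapp.
  move=> j; apply: (ub_le_sup hap_ub); exists j.+1, (mu j.+1 : 'I_n -> A); split => //.
have dapp0 : 0 <= dapp := le_trans (vnorm_ge0 _) (hap 0%N).
have eN : (m + H - 1 = m + H.-1)%N by rewrite -subn1 addnBA.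
have beta0 : 0 <= beta by rewrite /beta mulr_ge0 // exprn_ge0 // ltW.
have beta1 : beta < 1.
  rewrite /beta.
  case/boolP: (dFV == 0) => [/eqP ->|nz]; first by rewrite mulr0.
  have dpos : 0 < dFV by rewrite lt_neqAle eq_sym nz dFV0.
  set N := (m + H - 1)%N in hln *.
  have ai1 : 1 < alpha^-1 by rewrite invf_gt1.
  have ai0 : 0 < alpha^-1 by rewrite invr_gt0.
  have lai : 0 < ln alpha^-1 by apply: ln_gt0.
  have h1 : ln dFV < ln (alpha^-1 ^+ N).
    by rewrite lnXn // -mulr_natl -ltr_pdivrMr.
  rewrite ltr_ln ?posrE // ?exprn_gt0 // in h1.
  have : alpha ^+ N * dFV < alpha ^+ N * alpha^-1 ^+ N by rewrite ltr_pM2l // exprn_gt0.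
  by rewrite -exprMn mulfV ?lt0r_neq0 // expr1n.
set e_ := fun j => vnorm (vsub (Jmu P r alpha (mu j)) (J j)).
set a_ := fun j => vnorm (vsub (Jmu P r alpha (mu j)) (Jstar P r alpha (mu 0%N))).
have K0 : 0 <= K _ alpha by rewrite Kdef invr_ge0 ltW.
have estep : forall j, e_ j.+1 <= beta * e_ j + tau.
  move=> j; rewrite /e_ (hJ j).
  apply: le_trans (@stepB _ _ _ P r alpha HP0 HP1 Hr Ha a0 m H (J j) (mu j) (mu j.+1)
     _ _ dFV epsPE dapp (hMk j) (hw j) (hap j)) _.
  rewrite /beta /tau eN -Kdef.
  have : 0 <= alpha ^+ (m + H.-1) * K _ alpha * dFV.
    by apply: mulr_ge0 => //; apply: mulr_ge0 => //; apply: exprn_ge0; apply: ltW.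
  have : (alpha ^+ m + alpha ^+ (m + H.-1)) / (1 - alpha) * dFV =
     alpha ^+ m * K _ alpha * dFV + alpha ^+ (m + H.-1) * K _ alpha * dFV by rewrite Kdef; ring.
  lra.
have astep : forall j, a_ j.+1 <= alpha ^+ H * a_ j + (2 * alpha ^+ H * e_ j + epsLA) * (1 - alpha)^-1.
  move=> j; exact: (@stepA _ _ _ P r alpha HP0 HP1 Hr Ha a0 H (J j) (mu j) (mu j.+1) (mu 0%N)
     epsLA H1 (hLA j)).
have a00 : a_ 0%N <= (1 - alpha)^-1.
  apply: vnorm_le; first by rewrite invr_ge0 ltW.
  move=> s; rewrite /vsub ler_norml.
  have := @Jmu_rng _ _ _ P r alpha HP0 HP1 Hr Ha (mu 0%N) s.
  have := Jmu_le_Jstar P r alpha (mu 0%N) (mu 0%N) s.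
  have : Jstar P r alpha (mu 0%N) s <= K _ alpha.
    apply: Jstar_le => nu; by case/andP: (@Jmu_rng _ _ _ P r alpha HP0 HP1 Hr Ha nu s).
  rewrite Kdef => ? ? /andP[? ?]; apply/andP; split; lra.
have tau0 : 0 <= tau.
  rewrite /tau; apply: addr_ge0; last exact: mulr_ge0.
  apply: addr_ge0 => //; apply: mulr_ge0 => //; apply: divr_ge0; last exact: ltW.
  by apply: addr_ge0; apply: exprn_ge0; apply: ltW.
have xH : 0 <= alpha ^+ H < 1.
  by rewrite exprn_ge0 ?ltW //= expr_lt1 // ltW.
have := @unroll _ alpha (alpha ^+ H) beta (e_ 0%N) tau epsLA a_ e_ Ha xH
  (andP_intro _ _ beta0 beta1) (vnorm_ge0 _) tau0 eLA0 erefl estep a00 astep k.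
by rewrite mulnC exprM.
Qed.
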